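(* Let $\beta:[r]\to[2n]$ be qubit-injective and $R\in B_{2n}(T_{TCR}(\beta))$. If there exist $m$, $L\in L_m(P_m)$ and an increasing $\alpha:[r]\to[m]$ such that $L\,\Pi(\alpha,\beta)=\Pi(\alpha,\beta)\,R$, then $R=I_{2n}$.
   Context: $\mathbb{F}$ is the field with two elements, $[N]=\{1,\dots,N\}$, $e_{N,i}$ standard basis column vectors, $I_N$ identity. $P_m=\{(i,j):i,j\in[m],i>j\}$, $L_m(P_m)$ the lower unitriangular $m\times m$ matrices over $\mathbb{F}$. $R_{2n}=\sum_{i=1}^{2n}e_{2n,i}e_{2n,2n+1-i}^{\top}$; $\mathrm{Sp}_{2n}=\{C:C^{\top}R_{2n}C=R_{2n}\}$. For $T\subseteq P_{2n}$ transitive and closed under reversal, $B_{2n}(T)=\big(I_{2n}+\mathrm{span}_{\mathbb{F}}\{e_{2n,i}e_{2n,j}^{\top}:(i,j)\in T\}\big)\cap\mathrm{Sp}_{2n}$. $\Pi(\alpha,\beta)=\sum_{i=1}^re_{m,\alpha(i)}e_{2n,\beta(i)}^{\top}\in\mathbb{F}^{m\times2n}$. $Q_n(i)=\min(i,2n+1-i)$; $\beta$ is qubit-injective if $Q_n\circ\beta$ is injective. $T_M(\beta)=\{(i,j):i\in\mathrm{Im}(\beta),j<i,Q_n(j)\notin\{Q_n(\beta(1)),\dots,Q_n(\beta(\beta^{-1}(i)-1))\}\}$, $T_{MR}(\beta)=\{(i,j):(2n+1-j,2n+1-i)\in T_M(\beta)\}$, $T_{TCR}(\beta)=T_M(\beta)\cup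 T_{MR}(\beta)$. *)

(* Defs.v *)
From HB Require Import structures.
From mathcomp Require Import all_boot all_order all_algebra.
Set Implicit Arguments. Unset Strict Implicit. Unset Printing Implicit Defensive.
Import GRing.Theory.
Local Open Scope ring_scope.

(* All indices are 0-based: [N] = {1..N} is represented by 'I_N,
   index i (1-based) corresponds to i-1 (0-based).  The field F is 'F_2. *)

(* Q_n(i) = min(i, 2n+1-i) (1-based); 0-based: min(i, 2n-1-i) = min(i, rev_ord i). *)
Definition Qn (n : nat) (i : 'I_(2 * n)) : nat := minn i (rev_ord i).

Definition qubit_injective (n r : nat) (beta : 'I_r -> 'I_(2 * n)) : Prop :=
  injective (fun k => Qn (beta k)).

Definition T_M (n r : nat) (beta : 'I_r -> 'I_(2 * n)) : rel 'I_(2 * n) :=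
  fun i j => [exists k : 'I_r, [&& beta k == i, (j < i)%N &
               [forall k' : 'I_r, (k' < k)%N ==> (Qn j != Qn (beta k'))]]].

Definition T_MR (n r : nat) (beta : 'I_r -> 'I_(2 * n)) : rel 'I_(2 * n) :=
  fun i j => T_M beta (rev_ord j) (rev_ord i).

Definition T_TCR (n r : nat) (beta : 'I_r -> 'I_(2 * n)) : rel 'I_(2 * n) :=
  fun i j => T_M beta i j || T_MR beta i j.

Definition Rform (N : nat) : 'M['F_2]_N := \matrix_(i < N, j < N) (j == rev_ord i)%:R.

Definition symplectic (n : nat) (C : 'M['F_2]_(2 * n)) : Prop :=
  C^T *m Rform (2 * n) *m C = Rform (2 * n).

Definition in_B (n : nat) (T : rel 'I_(2 * n)) (C : 'M['F_2]_(2 * n)) : Prop :=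
  (forall i j, ~~ T i j -> (C - 1%:M) i j = 0) /\ symplectic C.

Definition lower_unitri (m : nat) (L : 'M['F_2]_m) : Prop :=
  (forall i j : 'I_m, (i < j)%N -> L i j = 0) /\ (forall i : 'I_m, L i i = 1).

Definition Pimx (m n r : nat) (alpha : 'I_r -> 'I_m) (beta : 'I_r -> 'I_(2 * n))
  : 'M['F_2]_(m, 2 * n) :=
  \matrix_(a < m, b < 2 * n) \sum_(k < r) ((alpha k == a) && (beta k == b))%:R.

(* Main.v *)
Require Import Defs.
From HB Require Import structures.
From mathcomp Require Import all_boot all_order all_algebra.
From mathcomp Require Import zify.
Import GRing.Theory.
Local Open Scope ring_scope.

Lemma Qn_rev n (i : 'I_(2 * n)) : Qn (rev_ord i) = Qn i.
Proof. by rewrite /Qn rev_ordK minnC. Qed.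

Lemma Qn_eq n (i j : 'I_(2 * n)) : Qn i = Qn j -> i = j \/ j = rev_ord i.
Proof.
rewrite /Qn => H.
have Hi := ltn_ord i; have Hj := ltn_ord j.
have [E|E] : (nat_of_ord i = j \/ nat_of_ord j = rev_ord i).
  move: H; rewrite /= => H; lia.
- by left; apply: val_inj.
- by right; apply: val_inj.
Qed.

Lemma rev_neq n (i : 'I_(2 * n)) : i != rev_ord i.
Proof.
apply/eqP => /(congr1 val) /= H; have := ltn_ord i; lia.
Qed.

Lemma JJ n : Rform n *m Rform n = 1%:M.
Proof.
apply/matrixP => i j; rewrite !mxE (bigD1 (rev_ord i)) //= big1.
  by rewrite !mxE eqxx mul1r addr0 rev_ordK eq_sym.
by move=> l Hl; rewrite !mxE (negbTE Hl) mul0r.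
Qed.

Theorem lemma9 (n r : nat) (beta : 'I_r -> 'I_(2 * n)) (R : 'M['F_2]_(2 * n)) :
  qubit_injective beta ->
  in_B (T_TCR beta) R ->
  (exists (m : nat) (L : 'M['F_2]_m) (alpha : 'I_r -> 'I_m),
      [/\ lower_unitri L,
          (forall x y : 'I_r, (x < y)%N -> (alpha x < alpha y)%N) &
          L *m Pimx alpha beta = Pimx alpha beta *m R]) ->
  R = 1%:M.
Proof.
move=> qinj [HT Hsp] [m [L [alpha [[Llo Ldiag] Hinc HLP]]]].
have binj : injective beta.
  move=> x y /(congr1 (@Qn n)); exact: qinj.
have ainj : injective alpha.
  move=> x y E; case: (ltngtP x y) => H.
  - by have := Hinc _ _ H; rewrite E ltnn.
  - by have := Hinc _ _ H; rewrite E ltnn.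
  - exact: val_inj.
set P := Pimx alpha beta in HLP.
have Prow : forall k b, P (alpha k) b = (beta k == b)%:R.
  move=> k b; rewrite mxE (bigD1 k) //= eqxx /= big1 ?addr0 //.
  move=> k' Hk'; case: eqP => [/ainj E|//]; by rewrite E eqxx in Hk'.
have Pcol : forall k a, P a (beta k) = (alpha k == a)%:R.
  move=> k a; rewrite mxE (bigD1 k) //= eqxx andbT big1 ?addr0 //.
  move=> k' Hk'; case: (eqP (x := beta k')) => [/binj E|]; last by rewrite andbF.
  by rewrite E eqxx in Hk'.
have Pnot : forall a b, (forall k, beta k != b) -> P a b = 0.
  move=> a b Hb; rewrite mxE big1 // => k _; by rewrite (negbTE (Hb k)) andbF.
have RowE : forall k j, R (beta k) j = (L *m P) (alpha k) j.
  move=> k j; rewrite HLP mxE (bigD1 (beta k)) //= Prow eqxx mul1r big1 ?addr0 //.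
  by move=> b Hb; rewrite Prow eq_sym (negbTE Hb) mul0r.
have LPE : forall k k', (L *m P) (alpha k) (beta k') = L (alpha k) (alpha k').
  move=> k k'; rewrite mxE (bigD1 (alpha k')) //= Pcol eqxx mulr1 big1 ?addr0 //.
  by move=> a Ha; rewrite Pcol eq_sym (negbTE Ha) mulr0.
have notT : forall k k' : 'I_r, (k' < k)%N -> ~~ T_TCR beta (beta k) (beta k').
  move=> k k' Hlt; rewrite /T_TCR negb_or; apply/andP; split.
  - apply/existsP => -[k0 /and3P [/eqP /binj E _ /forallP F]]; subst k0.
    by have := F k'; rewrite Hlt /= eqxx.
  - apply/existsP => -[k0 /and3P [/eqP E _ _]].
    have : Qn (beta k0) = Qn (beta k') by rewrite E Qn_rev.
    move/qinj => E2; rewrite E2 in E.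
    by move: (@rev_neq _ (beta k')); rewrite -E eqxx.
have Rrow : forall (k : 'I_r) j, R (beta k) j = (beta k == j)%:R.
  move=> k j; case: (boolP [exists k'', beta k'' == j]).
  - move=> /existsP [k'' /eqP <-]; rewrite RowE LPE.
    case: (ltngtP k'' k) => H.
    + have := HT _ _ (notT _ _ H); rewrite !mxE RowE LPE.
      have -> : (beta k == beta k'') = false.
        by apply/negP => /eqP /binj E; rewrite E ltnn in H.
      by rewrite subr0 => ->.
    + rewrite Llo ?Hinc //.
      have -> : (beta k == beta k'') = false.
        by apply/negP => /eqP /binj E; rewrite E ltnn in H.
      by [].
    + have -> : k'' = k by apply: val_inj.
      by rewrite Ldiag eqxx.
  - rewrite negb_exists => /forallP Hn.
    rewrite RowE mxE big1.
      by case: eqP => // E; have := Hn k; rewrite E eqxx.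
    by move=> a _; rewrite Pnot ?mulr0.
rewrite /symplectic in Hsp; set J := Rform (2 * n) in Hsp.
have Hsp2 : R *m J *m R^T = J.
  have H1 : (J *m R^T *m J) *m R = 1%:M.
    by rewrite -!mulmxA (mulmxA R^T J R) Hsp JJ.
  have H2 := mulmx1C H1.
  rewrite -[RHS]mul1mx -H2 -!mulmxA.
  by rewrite JJ mulmx1.
have Rcol : forall (k : 'I_r) b, R b (rev_ord (beta k)) = (b == rev_ord (beta k))%:R.
  move=> k b.
  have := Hsp2; move/matrixP => /(_ (beta k) b).
  have RJ : forall i, (R *m J) (beta k) i = (i == rev_ord (beta k))%:R.
    move=> i; rewrite mxE (bigD1 (beta k)) //= big1.
      by rewrite addr0 Rrow eqxx mul1r /J /Rform mxE.
    by move=> l Hl; rewrite Rrow eq_sym (negbTE Hl) mul0r.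
  rewrite mxE (bigD1 (rev_ord (beta k))) //= big1.
    by rewrite addr0 RJ eqxx mul1r mxE /J /Rform mxE => ->.
  by move=> i Hi; rewrite RJ (negbTE Hi) mul0r.
apply/matrixP => i j.
case: (boolP (T_TCR beta i j)).
- case/orP.
  + move=> /existsP [k /and3P [/eqP <- _ _]]; by rewrite Rrow !mxE.
  + move=> /existsP [k /and3P [/eqP E _ _]].
    have -> : j = rev_ord (beta k) by rewrite E rev_ordK.
    by rewrite Rcol !mxE.
- move/HT; rewrite !mxE => /eqP; rewrite subr_eq0 => /eqP ->.
  by [].
Qed.
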